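(* Let $G\leq\operatorname{Homeo}(\mathfrak{C})$ be vigorous and let $A\in K_{\mathfrak{C}}$. Then a free group of rank $2$ embeds in $\operatorname{pstab}_G(A)$.
   Context: $\mathfrak{C}$ denotes a Cantor space (a space homeomorphic to $\{0,1\}^\omega$). Groups of homeomorphisms act on the right. $K_{\mathfrak{C}}$ denotes the set of non-empty proper clopen subsets of $\mathfrak{C}$. For $\gamma\in\operatorname{Homeo}(\mathfrak{C})$, $\operatorname{supp}(\gamma)=\{p\in\mathfrak{C}: p\gamma\neq p\}$. For $G\le\operatorname{Homeo}(\mathfrak{C})$ and $A\subseteq\mathfrak{C}$, $\operatorname{pstab}_G(A)=\{g\in G: pg=p \text{ for all } p\in A\}$. A subset $S\subseteq \operatorname{Homeo}(\mathfrak{C})$ is vigorous if for all clopen $A,B,C\subseteq\mathfrak{C}$ with $B,C$ non-empty proper subsets of $A$ there is $\gamma\in S$ with $\operatorname{supp}(\gamma)\subseteq A$ and $B\gamma\subseteq C$. *)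

(* Defs.v *)
From HB Require Import structures.
From mathcomp Require Import all_boot all_order all_algebra.
From mathcomp Require Import all_classical all_reals all_analysis.
Set Implicit Arguments. Unset Strict Implicit. Unset Printing Implicit Defensive.
Local Open Scope classical_set_scope.

Notation Cantor := cantor_space.

Definition is_homeo (f : Cantor -> Cantor) : Prop :=
  continuous f /\ exists g : Cantor -> Cantor,
    [/\ continuous g, cancel f g & cancel g f].

Definition homeo_subgroup (G : set (Cantor -> Cantor)) : Prop :=
  [/\ forall f, G f -> is_homeo f,
      G id,
      (forall f g, G f -> G g -> G (g \o f)) &
      (forall f, G f -> exists2 g, G g & cancel f g /\ cancel g f)].

Definition K_C (A : set Cantor) : Prop :=
  [/\ clopen A, A !=set0 & A <> setT].

Definition supp (g : Cantor -> Cantor) : set Cantor := [set p | g p <> p].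

Definition pstab (G : set (Cantor -> Cantor)) (A : set Cantor) :
    set (Cantor -> Cantor) :=
  [set g | G g /\ forall p, A p -> g p = p].

Definition vigorous (S : set (Cantor -> Cantor)) : Prop :=
  forall A B C : set Cantor, clopen A -> clopen B -> clopen C ->
    B !=set0 -> C !=set0 -> B `<` A -> C `<` A ->
    exists2 g, S g & supp g `<=` A /\ g @` B `<=` C.

(* Words in the free group on two generators: a letter is
   (generator : bool, inverted : bool); false = first generator. *)
Definition letter := (bool * bool)%type.

Definition inverse_letter (l : letter) : letter := (l.1, ~~ l.2).

Fixpoint reduced (w : seq letter) : bool :=
  match w with
  | x :: ((y :: _) as w') => (y != inverse_letter x) && reduced w'
  | _ => true
  end.

(* Evaluation of a word with right action: p (x1 x2 ... xn) = xn(...(x1 p)). *)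
Definition eval_letter (a a' b b' : Cantor -> Cantor) (l : letter) :=
  match l with
  | (false, false) => a | (false, true) => a'
  | (true, false) => b  | (true, true) => b'
  end.

Definition eval_word (a a' b b' : Cantor -> Cantor) (w : seq letter) :
    Cantor -> Cantor :=
  foldl (fun f l => eval_letter a a' b b' l \o f) id w.

(* A free group of rank 2 embeds in the group H (a subset of G):
   there are a, b in H, with inverses a', b', such that no non-empty
   reduced word in a^{±1}, b^{±1} evaluates to the identity. *)
Definition free_rank2_embeds (H : set (Cantor -> Cantor)) : Prop :=
  exists a a' b b' : Cantor -> Cantor,
    [/\ H a, H b, cancel a a' /\ cancel a' a, cancel b b' /\ cancel b' b &
        forall w : seq letter, w != [::] -> reduced w ->
          eval_word a a' b b' w <> id].

(* Main.v *)
Require Import Defs.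
From mathcomp Require Import all_boot all_order all_algebra.
From mathcomp Require Import all_classical all_reals all_analysis.
Local Open Scope classical_set_scope.

Lemma split_clopen (U : set cantor_space) : clopen U -> U !=set0 ->
  exists U1 U2 : set cantor_space, [/\ clopen U1 /\ clopen U2, U1 !=set0 /\ U2 !=set0,
   U1 `<=` U, U2 `<=` U & forall y, U1 y -> U2 y -> False].
Proof.
move=> [oU cU] U0.
have [x [y [Ux Uy xy]]] := (proj1 perfectTP_ex cantor_perfect) U oU U0.
have [i xyi] : exists i, x i != y i.
  apply: contrapT => H; move/eqP: xy; apply; apply: functional_extensionality_dep.
  move=> i; apply/eqP; apply: contrapT => H'; apply: H; exists i; exact/negP.
have cS : clopen (proj i @^-1` [set x i] : set cantor_space).
  apply: preimage_clopen; last exact: proj_continuous.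
  split; [exact: discrete_open | exact: discrete_closed].
exists (U `&` (proj i @^-1` [set x i])), (U `&` ~` (proj i @^-1` [set x i])).
split; [split|split| | | ].
- by apply: clopenI.
- by apply: clopenI => //; apply: clopenC.
- by exists x.
- exists y; split => //= H; rewrite /proj in H; by rewrite H eqxx in xyi.
- by move=> z [].
- by move=> z [].
- by move=> z [_ H1] [_ H2].
Qed.

Section PP.
Local Notation T := cantor_space.
Variables (a a' b b' : T -> T).
Let g := fun (f : T -> T) (l : letter) => eval_letter a a' b b' l \o f.

Lemma foldl_comp w : forall h y, foldl g h w y = foldl g id w (h y).
Proof.
elim: w => [|l w IH] h y //=.
by rewrite IH [in RHS]IH.
Qed.

Lemma inv_inv l : inverse_letter (inverse_letter l) = l.
Proof. by case: l => [u v]; rewrite /inverse_letter /= negbK. Qed.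

Lemma pingpong (D : set T) (P : letter -> set T) x0 :
  (forall l, P l `<=` D) ->
  (forall l l' y, P l y -> P l' y -> l = l') ->
  D x0 -> (forall l, ~ P l x0) ->
  (forall l y, D y -> ~ P (inverse_letter l) y -> P l (eval_letter a a' b b' l y)) ->
  forall w, w != [::] -> reduced w -> eval_word a a' b b' w <> id.
Proof.
move=> PD Pdisj Dx0 Px0 Hl.
have claim : forall w l y, reduced (l :: w) -> D y -> ~ P (inverse_letter l) y ->
   P (last l w) (eval_word a a' b b' (l :: w) y).
  elim => [|l2 w IH] l y.
    by move=> _ Dy Py; apply: Hl.
  move=> /= /andP [Hl2 Hr] Dy Py.
  rewrite /eval_word /= foldl_comp.
  have Pl := Hl l y Dy Py.
  have Pi2 : ~ P (inverse_letter l2) (eval_letter a a' b b' l y).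
    move=> Pi; have E := Pdisj _ _ _ Pl Pi.
    by move: Hl2; rewrite E inv_inv eqxx.
  have := IH l2 _ Hr (PD _ _ Pl) Pi2.
  by rewrite /eval_word /= -/g foldl_comp.
case => [//|l w] _ Hr E.
have := claim w l x0 Hr Dx0 (Px0 _).
by rewrite E; apply: Px0.
Qed.
End PP.

Lemma gen_lemma (G : set (cantor_space -> cantor_space)) (A : set cantor_space)
  (Pp Pm : set cantor_space) :
  homeo_subgroup G -> vigorous G -> clopen A ->
  clopen Pp -> clopen Pm -> Pp !=set0 -> Pm !=set0 ->
  Pp `<=` ~` A -> Pm `<=` ~` A -> (forall y, Pp y -> Pm y -> False) ->
  exists a a' : cantor_space -> cantor_space,
   [/\ pstab G A a, cancel a a' /\ cancel a' a,
     (forall y, (~` A) y -> ~ Pm y -> Pp (a y)) &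
     (forall y, (~` A) y -> ~ Pp y -> Pm (a' y))].
Proof.
move=> [Ghom Gid Gcomp Ginv] hv clA cp cm [qp Hqp] [qm Hqm] sp sm dpm.
have clD : clopen (~` A) by apply: clopenC.
have [a Ga [suppa ha]] : exists2 a, G a & supp a `<=` ~` A /\ a @` (~` A `&` ~` Pm) `<=` Pp.
  apply: hv => //.
  - by apply: clopenI => //; apply: clopenC.
  - by exists qp; split; [apply: sp | move=> H; apply: (dpm qp)].
  - by exists qp.
  - split; first by move=> z [].
    by move=> H; have [_] := H qm (sm _ Hqm); apply.
  - split => // H; exact: (dpm qm (H qm (sm _ Hqm)) Hqm).
have fixA : forall z, A z -> a z = z.
  move=> z Az; apply: contrapT => H; exact: (suppa z H Az).
have [a' _ [c1 c2]] := Ginv a Ga.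
exists a, a'; split => //.
- by move=> y Dy Py; apply: ha; exists y.
- move=> y Dy Py; apply: contrapT => H.
  have Da' : (~` A) (a' y).
    move=> Aa; apply: Dy; have := fixA _ Aa; rewrite c2 => ->; exact: Aa.
  apply: Py; rewrite -[y]c2; apply: ha; exists (a' y) => //.
Qed.

Theorem theorem2p2 (G : set (cantor_space -> cantor_space)) (A : set cantor_space) :
  homeo_subgroup G -> vigorous G -> K_C A -> free_rank2_embeds (pstab G A).
Proof.
move=> hG hv [clA [p Ap] AT].
have clD : clopen (~` A) by apply: clopenC.
have D0 : (~` A) !=set0.
  apply: contrapT => H; apply: AT; apply/seteqP; split => // z _.
  apply: contrapT => nz; apply: H; by exists z.
have [E1 [E2 [[c1 c2] [ne1 ne2] s1 s2 d12]]] := split_clopen _ clD D0.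
have [P1 [P2 [[c11 c12] [ne11 ne12] s11 s12 d112]]] := split_clopen _ c1 ne1.
have [P3 [E3 [[c21 c22] [ne21 ne22] s21 s22 d212]]] := split_clopen _ c2 ne2.
have [P4 [E4 [[c31 c32] [ne31 [x0 Ex0]] s31 s32 d312]]] := split_clopen _ c22 ne22.
have [a [a' [Ha ca Hpa Hma]]] :=
  @gen_lemma _ _ _ _ hG hv clA c11 c12 ne11 ne12
    (fun z h => s1 _ (s11 _ h)) (fun z h => s1 _ (s12 _ h)) d112.
have [b [b' [Hb cb Hpb Hmb]]] :=
  @gen_lemma _ _ _ _ hG hv clA c21 c31 ne21 ne31
    (fun z h => s2 _ (s21 _ h)) (fun z h => s2 _ (s22 _ (s31 _ h)))
    (fun y h1 h2 => d212 y h1 (s31 _ h2)).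
exists a, a', b, b'; split => //.
pose P (l : letter) := match l with
  | (false, false) => P1 | (false, true) => P2
  | (true, false) => P3 | (true, true) => P4 end.
apply: (@pingpong a a' b b' (~` A) P x0).
- case=> [[] []] z /= h.
  + exact: s2 (s22 _ (s31 _ h)).
  + exact: s2 (s21 _ h).
  + exact: s1 (s12 _ h).
  + exact: s1 (s11 _ h).
- case=> [[] []] [[] []] y //= h h'; exfalso.
  + exact: d212 y h' (s31 _ h).
  + exact: d12 y (s12 _ h') (s22 _ (s31 _ h)).
  + exact: d12 y (s11 _ h') (s22 _ (s31 _ h)).
  + exact: d212 y h (s31 _ h').
  + exact: d12 y (s12 _ h') (s21 _ h).
  + exact: d12 y (s11 _ h') (s21 _ h).
  + exact: d12 y (s12 _ h) (s22 _ (s31 _ h')).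
  + exact: d12 y (s12 _ h) (s21 _ h').
  + exact: d112 y h' h.
  + exact: d12 y (s11 _ h) (s22 _ (s31 _ h')).
  + exact: d12 y (s11 _ h) (s21 _ h').
  + exact: d112 y h h'.
- exact: s2 (s22 _ (s32 _ Ex0)).
- case=> [[] []] /= h.
  + exact: d312 x0 h Ex0.
  + exact: d212 x0 h (s32 _ Ex0).
  + exact: d12 x0 (s12 _ h) (s22 _ (s32 _ Ex0)).
  + exact: d12 x0 (s11 _ h) (s22 _ (s32 _ Ex0)).
- case=> [[] []] y /= Dy Py.
  + exact: Hmb.
  + exact: Hpb.
  + exact: Hma.
  + exact: Hpa.
Qed.
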